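(* Let $\alpha>0$, $x\in\mathbb{R}^+$ and $r>0$. Let $B_\delta(x,r)=\{y\in\mathbb{R}^+:\delta(x,y)<r\}$. All integrals below are in $y$, with integrand a function of $\delta(x,y)$. (a) $B_\delta(x,r)$ is the largest dyadic interval in $\mathcal{D}$ that contains $x$ and has measure less than $r$. Denote it by $I(x,r)$. (b) $\displaystyle\int_{B_\delta(x,r)}\frac{dy}{\delta(x,y)^{1-\alpha}}=\frac{1}{2(1-2^{-\alpha})}|I(x,r)|^{\alpha}$. This quantity is comparable to $r^\alpha$, with constants depending only on $\alpha$. (c) $\displaystyle\int_{B_\delta(x,r)}\frac{dy}{\delta(x,y)^{1+\alpha}}=+\infty$. (d) $\displaystyle\int_{\mathbb{R}^+\setminus B_\delta(x,r)}\frac{dy}{\delta(x,y)^{1+\alpha}}=\frac{2^{-\alpha}}{2(1-2^{-\alpha})}|I(x,r)|^{-\alpha}$. This quantity is comparable to $r^{-\alpha}$, with constants depending only on $\alpha$. (e) $\displaystyle\int_{\mathbb{R}^+\setminus B_\delta(x,r)}\frac{dy}{\delta(x,y)^{1-\alpha}}=+\infty$. (f) $\displaystyle\int_{B_\delta(x,r)}\frac{dy}{\delta(x,y)}=\int_{\mathbb{R}^+\setminus B_\delta(x,r)}\frac{dy}{\delta(x,y)}=+\infty$.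
   Context: Let $\mathbb{R}^+=(0,\infty)$. $\mathcal{D}$ is the family of dyadic intervals in $\mathbb{R}^+$, namely the intervals $I^j_k=(k2^{-j},(k+1)2^{-j}]$ with $j\in\mathbb{Z}$ and $k$ a nonnegative integer. The dyadic distance on $\mathbb{R}^+$ is $\delta(x,y)=\inf\{|I|: I\in\mathcal{D},\ x,y\in I\}$. It is a metric and satisfies $|x-y|\le\delta(x,y)$. *)

(* Defs.v *)
From HB Require Import structures.
From mathcomp Require Import all_boot all_order all_algebra.
From mathcomp Require Import all_classical all_reals all_analysis.
Set Implicit Arguments. Unset Strict Implicit. Unset Printing Implicit Defensive.
Import Order.TTheory GRing.Theory Num.Theory.
Local Open Scope classical_set_scope.
Local Open Scope ring_scope.

Section Dyadic.
Variable R : realType.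

Definition Rpos : set R := `]0, +oo[.

Definition dyadic (j : int) (k : nat) : set R :=
  `] k%:R * (2:R) ^ (- j), k.+1%:R * (2:R) ^ (- j)].

Definition dyadicD : set (set R) := [set I | exists (j : int) (k : nat), I = dyadic j k].

Definition msr (A : set R) : R := fine (@lebesgue_measure R A).

Definition ddist (x y : R) : R :=
  inf [set msr I | I in [set I | dyadicD I /\ I x /\ I y]].

Definition dball (x r : R) : set R := [set y | Rpos y /\ ddist x y < r].

End Dyadic.
Arguments Rpos {R}.

(* Main.v *)
Require Import Defs.
From HB Require Import structures.
From mathcomp Require Import all_boot all_order all_algebra.
From mathcomp Require Import all_classical all_reals all_analysis.
From mathcomp Require Import ring lra measurable_realfun.
Import Order.TTheory GRing.Theory Num.Theory.
Local Open Scope classical_set_scope.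
Local Open Scope ring_scope.

Section P1.
Context {R : realType}.

Definition pw (j : int) : R := (2:R) ^ (- j).

Lemma pw_gt0 j : 0 < pw j.
Proof. exact: exprz_gt0. Qed.

Lemma pw_add j (n : nat) : pw j = pw (j + n%:Z) * 2 ^+ n.
Proof.
rewrite /pw; have -> : (2:R) ^+ n = 2 ^ (n%:Z) by [].
by rewrite -expfzDr ?pnatr_eq0 // opprD addrNK.
Qed.

Lemma pw_le j j' : j <= j' -> pw j' <= pw j.
Proof. move=> h; apply: ler_weXz2l; first by rewrite ler1n. by rewrite lerN2. Qed.

Lemma pw_lt j j' : j < j' -> pw j' < pw j.
Proof. move=> h; rewrite /pw ltr_eXz2l ?ltr1n // ltrN2 //. Qed.

Lemma pwS j : pw j = 2 * pw (j + 1).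
Proof. by rewrite (pw_add j 1) mulrC expr1. Qed.

Lemma mem_dyadic j k y : dyadic j k y <-> Num.ceil (y / pw j) = k.+1%:Z.
Proof.
have p0 := pw_gt0 j.
rewrite /dyadic /= in_itv /=; split.
  move=> /andP[h1 h2]; apply: ceil_def; apply/andP; split.
    have -> : (k.+1%:Z - 1) = k%:Z by rewrite -addn1 PoszD addrK.
    by rewrite -pmulrn ltr_pdivlMr.
  by rewrite -pmulrn ler_pdivrMr.
move=> h; apply/andP; split.
  have := ceilB1_lt (y / pw j); rewrite h.
  have -> : (k.+1%:Z - 1) = k%:Z by rewrite -addn1 PoszD addrK.
  by rewrite -pmulrn ltr_pdivlMr.
by have := ceil_ge (y / pw j); rewrite h -pmulrn ler_pdivrMr.
Qed.


Lemma ceil_div_nat (a : R) (m : nat) : (0 < m)%N ->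
  Num.ceil (a / m%:R) = Num.ceil (((Num.ceil a)%:~R : R) / m%:R).
Proof.
move=> m0; have mR : 0 < m%:R :> R by rewrite ltr0n.
apply/le_anti/andP; split.
  by apply: le_ceil; rewrite ler_pM2r ?invr_gt0 // ceil_ge.
rewrite ceil_le_int ler_pdivrMr // mulrC.
set c := Num.ceil (a / m%:R).
have -> : m%:R * c%:~R = (m%:Z * c)%:~R :> R.
  by rewrite intrM -pmulrn.
rewrite ler_int ceil_le_int intrM -pmulrn -ler_pdivrMl // mulrC.
exact: ceil_ge.
Qed.

Definition Dy (j : int) (x : R) : set R :=
  [set y | Num.ceil (y / pw j) = Num.ceil (x / pw j)].

Lemma Dy_sub_add j (n : nat) x : Dy (j + n%:Z) x `<=` Dy j x.
Proof.
move=> y; rewrite /Dy /= => h.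
rewrite (pw_add j n) !invfM !mulrA -!natrX.
rewrite ceil_div_nat ?expn_gt0 // [in RHS]ceil_div_nat ?expn_gt0 //.
by rewrite h.
Qed.

Lemma Dy_sub j j' x : j <= j' -> Dy j' x `<=` Dy j x.
Proof.
move=> h; have -> : j' = j + `|j' - j|%N%:Z.
  by rewrite gez0_abs ?subr_ge0 // addrCA subrr addr0.
exact: Dy_sub_add.
Qed.

Lemma Dy_refl j x : Dy j x x.
Proof. by []. Qed.

Lemma ceil_pos (x : R) : 0 < x -> Num.ceil x = (`|Num.ceil x - 1|%N).+1%:Z.
Proof.
move=> x0; have h : 0 < Num.ceil x by rewrite ceil_gt0.
by rewrite -addn1 PoszD gez0_abs ?subrK // subr_ge0.
Qed.

Definition kx j x : nat := `|Num.ceil (x / pw j) - 1|%N.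

Lemma Dy_dyadic j x : 0 < x -> Dy j x = dyadic j (kx j x).
Proof.
move=> x0; apply/seteqP; split => y.
  rewrite /Dy /= => h; apply/mem_dyadic; rewrite h /kx.
  by apply: ceil_pos; rewrite divr_gt0 // pw_gt0.
move/mem_dyadic => h; rewrite /Dy /= h /kx.
by rewrite -ceil_pos // divr_gt0 // pw_gt0.
Qed.

Lemma dyadic_Dy j k x : dyadic j k x -> dyadic j k = Dy j x.
Proof.
move/mem_dyadic => hx; apply/seteqP; split => y.
  by move/mem_dyadic => hy; rewrite /Dy /= hx hy.
by rewrite /Dy /= hx => /mem_dyadic.
Qed.

Lemma Dy_pos j x y : 0 < x -> Dy j x y -> 0 < y.
Proof.
move=> x0; rewrite /Dy /= => h.
have : 0 < Num.ceil (y / pw j) by rewrite h ceil_gt0 divr_gt0 // pw_gt0.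
by rewrite ceil_gt0 pmulr_lgt0 // invr_gt0 pw_gt0.
Qed.

Lemma dyadic_bnd j k y : dyadic j k y -> k%:R * pw j < y <= k.+1%:R * pw j.
Proof. by rewrite /dyadic /= in_itv. Qed.

Lemma Dy_close j x y : 0 < x -> Dy j x y -> `|y - x| < pw j.
Proof.
move=> x0; rewrite Dy_dyadic // => /dyadic_bnd /andP[y1 y2].
have /dyadic_bnd /andP[x1 x2] : dyadic j (kx j x) x by rewrite -Dy_dyadic.
rewrite -natr1 mulrDl mul1r in x2 y2.
rewrite ltr_norml; apply/andP; split; lra.
Qed.

Lemma Dy_big j x y : 0 < x -> 0 < y -> x <= pw j -> y <= pw j -> Dy j x y.
Proof.
move=> x0 y0 xp yp; rewrite /Dy /=.
have p0 := pw_gt0 j.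
rewrite (@ceil_def _ _ 1) ?(@ceil_def _ _ 1) //; apply/andP; split;
  rewrite ?subrr ?divr_gt0 // ler_pdivrMr // mul1r //.
Qed.

End P1.
Arguments pw {R}.
Arguments Dy {R}.
Arguments kx {R}.


Section P2.
Context {R : realType}.
Notation mu := (@lebesgue_measure R).

Lemma leb_dyadic j k : mu (dyadic j k) = (pw j)%:E.
Proof.
rewrite /dyadic lebesgue_measure_itv /= lte_fin.
have p0 := @pw_gt0 R j.
rewrite ltr_pM2r // ltr_nat ltnSn -EFinD.
by rewrite -natr1 mulrDl mul1r addrAC subrr add0r.
Qed.

Lemma msr_dyadic j k : msr (@dyadic R j k) = pw j.
Proof. by rewrite /msr leb_dyadic. Qed.

Lemma meas_dyadic j k : measurable (dyadic j k : set R).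
Proof. exact: measurable_itv. Qed.

Lemma leb_Dy j {x : R} : 0 < x -> mu (Dy j x) = (pw j)%:E.
Proof. by move=> x0; rewrite Dy_dyadic // leb_dyadic. Qed.

Lemma meas_Dy j {x : R} : 0 < x -> measurable (Dy j x).
Proof. by move=> x0; rewrite Dy_dyadic //; exact: meas_dyadic. Qed.

Definition Ann j (x : R) := Dy j x `\` Dy (j + 1) x.

Lemma meas_Ann j (x : R) : 0 < x -> measurable (Ann j x).
Proof. by move=> x0; apply: measurableD; exact: meas_Dy. Qed.

Lemma leb_Ann j (x : R) : 0 < x -> mu (Ann j x) = (pw j / 2)%:E.
Proof.
move=> x0; have := measureD (mu:=mu) (meas_Dy j x0) (meas_Dy (j+1) x0).
pose M := lebesgue_measure_lebesgue_measure__canonical__measure_function_Content R.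
have e : forall j, M (Dy j x) = (pw j)%:E := fun j => leb_Dy j x0.
rewrite -/M e ltry => /(_ isT) ->.
rewrite setIidr; last by apply: Dy_sub; rewrite lerDl.
rewrite !e -EFinB (pwS j); congr (_%:E); lra.
Qed.

Lemma Ann_disj {j j'} {x : R} {y} : Ann j x y -> Ann j' x y -> j = j'.
Proof.
wlog : j j' / j <= j'.
  move=> H a b; case: (lerP j j') => h; first exact: H.
  by apply/esym; apply: H => //; exact: ltW.
rewrite le_eqVlt => /orP[/eqP //|h] [a1 a2] [b1 b2].
exfalso; apply: a2; apply: (@Dy_sub _ (j+1) j' x _ y b1).
by rewrite -lezD1 in h.
Qed.

Lemma ddist_Ann {j} {x y : R} : 0 < x -> Ann j x y -> ddist x y = pw j.
Proof.
move=> x0 [h1 h2].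
set S := [set msr I | I in [set I | dyadicD I /\ I x /\ I y]].
have Sp : S (pw j).
  exists (Dy j x); last by rewrite Dy_dyadic // msr_dyadic.
  split; first by exists j, (kx j x); rewrite Dy_dyadic.
  by split.
have lb : lbound S (pw j).
  move=> v [I [[j' [k ->]] [Ix Iy]] <-].
  rewrite msr_dyadic; apply: pw_le.
  rewrite (@dyadic_Dy _ j' k x Ix) in Iy.
  rewrite leNgt; apply/negP => hj; apply: h2.
  by apply: (@Dy_sub _ (j+1) j' x _ y Iy); rewrite lezD1.
apply/le_anti/andP; split.
  by apply: ge_inf => //; exists (pw j).
by apply: lb_le_inf => //; exists (pw j).
Qed.

End P2.


Section P3.
Context {R : realType}.

Lemma exp2_big (t : R) : exists n : nat, t < 2 ^+ n.
Proof.
exists (Num.trunc t).+1; apply: (lt_le_trans (truncnS_gt t)).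
rewrite -natrX ler_nat; apply: ltnW; exact: ltn_expl.
Qed.

Lemma RposE (y : R) : Rpos y <-> 0 < y.
Proof. by rewrite /Rpos /= in_itv /= andbT. Qed.

Lemma inside_eq j0 (x : R) : 0 < x ->
  Dy j0 x `\ x = \bigcup_m Ann (j0 + m%:Z) x.
Proof.
move=> x0; apply/seteqP; split => y.
  move=> [hy yx]; apply: contrapT => hn.
  have all : forall n : nat, Dy (j0 + n%:Z) x y.
    elim=> [|n IH]; first by rewrite addr0.
    have : ~ Ann (j0 + n%:Z) x y by move=> h; apply: hn; exists n.
    rewrite /Ann /= => h; apply: contrapT => h'; apply: h; split => //.
    by rewrite -addrA -PoszD addn1.
  have d0 : 0 < `|y - x| by rewrite normr_gt0 subr_eq0; apply/eqP.
  have [n hn'] := exp2_big (pw j0 / `|y - x|).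
  have := @Dy_close _ _ _ _ x0 (all n); rewrite ltNge => /negP; apply.
  have e : pw (j0 + n%:Z) = pw j0 / 2 ^+ n :> R.
    by rewrite (pw_add j0 n) mulfK // expf_neq0.
  rewrite e ler_pdivrMr ?exprn_gt0 //.
  by move: hn'; rewrite ltr_pdivrMr // => /ltW; rewrite mulrC.
move=> [m _ [h1 h2]]; split.
  by apply: (@Dy_sub _ j0 (j0 + m%:Z) x _ y h1); rewrite lerDl.
move=> /= yx; apply: h2; rewrite yx; exact: Dy_refl.
Qed.

Lemma outside_eq j0 (x : R) : 0 < x ->
  Rpos `\` Dy j0 x = \bigcup_m Ann (j0 - m.+1%:Z) x.
Proof.
move=> x0; apply/seteqP; split => y.
  move=> [/RposE y0 hy]; apply: contrapT => hn.
  have all : forall n : nat, ~ Dy (j0 - n%:Z) x y.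
    elim=> [|n IH]; first by rewrite subr0.
    move=> h; apply: hn; exists n => //; split => //.
    by rewrite -addn1 PoszD opprD addrA subrK.
  have [n hn'] := exp2_big (Num.max x y / pw j0).
  apply: (all n); apply: Dy_big => //.
    rewrite (pw_add (j0 - n%:Z) n) subrK mulrC -ler_pdivrMr ?pw_gt0 //.
    by apply: ltW; apply: le_lt_trans hn'; rewrite ler_pM2r ?invr_gt0 ?pw_gt0 // le_max lexx.
  rewrite (pw_add (j0 - n%:Z) n) subrK mulrC -ler_pdivrMr ?pw_gt0 //.
  by apply: ltW; apply: le_lt_trans hn'; rewrite ler_pM2r ?invr_gt0 ?pw_gt0 // le_max lexx orbT.
move=> [m _ [h1 h2]]; split.
  by apply/RposE; exact: (@Dy_pos _ _ _ _ x0 h1).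
move=> h; apply: h2; apply: (@Dy_sub _ (j0 - m.+1%:Z + 1) j0 x _ y h).
by rewrite -addn1 PoszD opprD addrA subrK lerBlDr lerDl.
Qed.

End P3.


Section P4.
Context {R : realType}.

Lemma pwN (n : nat) : pw (- n%:Z) = 2 ^+ n :> R.
Proof. by rewrite /pw opprK. Qed.

Lemma pwP (n : nat) : pw (n%:Z) = (2 ^+ n)^-1 :> R.
Proof. by rewrite /pw -exprnN. Qed.

Lemma exists_j0 (r : R) : 0 < r -> exists j0 : int, pw j0 < r /\ r <= pw (j0 - 1).
Proof.
move=> r0.
have [N hN] := exp2_big (Num.max r r^-1).
have hN1 : r < 2 ^+ N by apply: le_lt_trans hN; rewrite le_max lexx.
have hN2 : r^-1 < 2 ^+ N by apply: le_lt_trans hN; rewrite le_max lexx orbT.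
have exP : exists n : nat, pw (n%:Z - N%:Z) < r.
  exists (N + N)%N; rewrite PoszD addrK pwP.
  by rewrite -[r]invrK ltf_pV2 ?posrE ?invr_gt0 ?exprn_gt0.
case: (ex_minnP exP) => n0 Pn0 minn0.
case: n0 Pn0 minn0 => [|n1] Pn0 minn0.
  by move: Pn0; rewrite sub0r pwN ltNge (ltW hN1).
exists (n1.+1%:Z - N%:Z); split => //.
have : ~~ (pw (n1%:Z - N%:Z) < r).
  apply/negP => h; have := minn0 _ h; by rewrite ltnn.
rewrite -leNgt.
by have -> : n1.+1%:Z - N%:Z - 1 = n1%:Z - N%:Z by rewrite -addn1 PoszD addrAC addrK.
Qed.

Lemma Dy_exists {x y : R} : 0 < x -> 0 < y -> exists j, Dy j x y.
Proof.
move=> x0 y0; have [n hn] := exp2_big (Num.max x y).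
exists (- n%:Z); apply: Dy_big => //; rewrite pwN; apply: ltW; apply: le_lt_trans hn;
  by rewrite le_max lexx ?orbT.
Qed.

Definition dset (x y : R) := [set msr I | I in [set I | dyadicD I /\ I x /\ I y]].

Lemma dset_lb x y : lbound (dset x y) 0.
Proof.
move=> v [I [[j' [k ->]] _] <-]; rewrite msr_dyadic; exact/ltW/pw_gt0.
Qed.

Lemma dset_Dy {j} {x y : R} : 0 < x -> Dy j x y -> dset x y (pw j).
Proof.
move=> x0 h; exists (Dy j x); last by rewrite Dy_dyadic // msr_dyadic.
split; first by exists j, (kx j x); rewrite Dy_dyadic.
by split => //; exact: Dy_refl.
Qed.

Lemma ddist_le {j} {x y : R} : 0 < x -> Dy j x y -> ddist x y <= pw j.
Proof.
move=> x0 h; change (inf (dset x y) <= pw j).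
have hl : has_lbound (dset x y) by exists 0; exact: dset_lb.
exact: (ge_inf hl (dset_Dy x0 h)).
Qed.

Lemma j0_le j0 j (r : R) : pw j < r -> r <= pw (j0 - 1) -> j0 <= j.
Proof.
move=> h1 h2; rewrite leNgt; apply/negP => h.
have : pw (j0 - 1) <= pw j :> R by apply: pw_le; rewrite lerBrDr lezD1.
by rewrite leNgt (lt_le_trans h1 h2).
Qed.

Lemma dball_eq (x r : R) j0 : 0 < x -> pw j0 < r -> r <= pw (j0 - 1) ->
  dball x r = Dy j0 x.
Proof.
move=> x0 h1 h2; apply/seteqP; split => y.
  move=> [/RposE y0 hd].
  have [j hj] := Dy_exists x0 y0.
  have [v [I [[j' [k eI]] [Ix Iy]] <-] vr] := inf_lt (ex_intro _ _ (dset_Dy x0 hj)) hd.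
  rewrite eI in Ix Iy vr; rewrite (@dyadic_Dy _ j' k x Ix) in Iy.
  rewrite msr_dyadic in vr.
  by apply: (@Dy_sub _ j0 j' x _ y Iy); exact: j0_le vr h2.
move=> h; split; first by apply/RposE; exact: (@Dy_pos _ _ _ _ x0 h).
exact: le_lt_trans (ddist_le x0 h) h1.
Qed.

End P4.


Section P5.
Context {R : realType}.
Notation mu := (@lebesgue_measure R).

Lemma mfun_ann (g : R -> R) (x : R) (F : nat -> int) : 0 < x ->
  measurable_fun (\bigcup_m Ann (F m) x) (fun y => (g (ddist x y))%:E).
Proof.
move=> x0; apply/measurable_fun_bigcup => [m|m]; first exact: meas_Ann.
apply: (@eq_measurable_fun _ _ _ _ _ (cst (g (pw (F m)))%:E)); last exact: measurable_cst.
by move=> y /set_mem hy /=; rewrite (ddist_Ann x0 hy).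
Qed.

Lemma int_ann (g : R -> R) (x : R) (F : nat -> int) : 0 < x -> injective F ->
  (forall t, 0 < t -> 0 <= g t) ->
  (\int[mu]_(y in \bigcup_m Ann (F m) x) (g (ddist x y))%:E =
   \sum_(m <oo) (g (pw (F m)) * (pw (F m) / 2))%:E)%E.
Proof.
move=> x0 finj g0.
rewrite ge0_integral_bigcup //.
- apply: eq_eseriesr => m _.
  rewrite (eq_integral (cst (g (pw (F m)))%:E)); last first.
    by move=> y /set_mem hy /=; rewrite (ddist_Ann x0 hy).
  rewrite integral_cst; last exact: meas_Ann.
  have e := @leb_Ann _ (F m) x x0.
  change (((g (pw (F m)))%:E * mu (Ann (F m) x))%E = (g (pw (F m)) * (pw (F m) / 2))%:E).
  by rewrite e -EFinM.
- move=> m; exact: meas_Ann.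
- exact: mfun_ann.
- move=> y [m _ hy]; rewrite (ddist_Ann x0 hy) lee_fin; apply: g0; exact: pw_gt0.
- move=> i j _ _ [y [hi hj]]; apply: finj; exact: Ann_disj hi hj.
Qed.

End P5.


Section P6.
Context {R : realType}.

Lemma series_geo (a q : R) : 0 <= q < 1 ->
  (\sum_(m <oo) (a * q ^+ m)%:E = (a / (1 - q))%:E)%E.
Proof.
move=> /andP[q0 q1]; apply: cvg_lim => //.
apply: cvg_EFin; first by apply: nearW => n; rewrite /eseries /= sumEFin.
rewrite [X in X @ _ --> _](_ : _ = series (geometric a q)); last first.
  by apply/funext => n; rewrite /= /eseries /= sumEFin.
by apply: cvg_geometric_series; rewrite ger0_norm.
Qed.

Lemma series_div (a q : R) : 0 < a -> 1 <= q ->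
  (\sum_(m <oo) (a * q ^+ m)%:E = +oo)%E.
Proof.
move=> a0 q1.
have ge : forall n, ((n%:R * a)%:E <= \sum_(m <oo) (a * q ^+ m)%:E)%E.
  move=> n; apply: (le_trans _ (nneseries_lim_ge n _)); last first.
    move=> k _ _; rewrite lee_fin mulr_ge0 ?exprn_ge0 //; [exact: ltW|lra].
  rewrite sumEFin lee_fin.
  rewrite mulr_natl; have -> : a *+ n = \sum_(0 <= i < n) a by rewrite sumr_const_nat subn0.
  apply: ler_sum => i _; apply: ler_peMr; [exact: ltW | exact: exprn_ege1].
move: ge; case: (\sum_(m <oo) (a * q ^+ m)%:E)%E => // [s|] ge.
  have [n hn] : exists n : nat, s / a < n%:R.
    exists (Num.trunc (s / a)).+1; exact: truncnS_gt.
  have := ge n; rewrite lee_fin -ler_pdivlMr // => h.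
  by have := lt_le_trans hn h; rewrite ltxx.
by have := ge 0%N.
Qed.

End P6.


Section P7.
Context {R : realType}.
Notation mu := (@lebesgue_measure R).

Lemma inside_int (g : R -> R) (x r : R) j0 : 0 < x ->
  pw j0 < r -> r <= pw (j0 - 1) ->
  (forall t, 0 < t -> 0 <= g t) ->
  (\int[mu]_(y in dball x r) (g (ddist x y))%:E =
   \sum_(m <oo) (g (pw (j0 + m%:Z)) * (pw (j0 + m%:Z) / 2))%:E)%E.
Proof.
move=> x0 h1 h2 g0; rewrite (@dball_eq _ x r j0 x0 h1 h2).
rewrite -(@integral_setD1 _ _ x).
- rewrite inside_eq //; apply: int_ann => //.
  by move=> m n /addrI [].
- rewrite inside_eq //; apply: bigcup_measurable => m _; exact: meas_Ann.
- rewrite inside_eq //; exact: mfun_ann.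
Qed.

Lemma outside_int (g : R -> R) (x r : R) j0 : 0 < x ->
  pw j0 < r -> r <= pw (j0 - 1) ->
  (forall t, 0 < t -> 0 <= g t) ->
  (\int[mu]_(y in Rpos `\` dball x r) (g (ddist x y))%:E =
   \sum_(m <oo) (g (pw (j0 - m.+1%:Z)) * (pw (j0 - m.+1%:Z) / 2))%:E)%E.
Proof.
move=> x0 h1 h2 g0; rewrite (@dball_eq _ x r j0 x0 h1 h2) outside_eq //.
apply: int_ann => //.
by move=> m n /addrI /oppr_inj [].
Qed.

Lemma powX (a u : R) (k : nat) : 0 <= a -> (a ^+ k) `^ u = (a `^ u) ^+ k.
Proof.
move=> a0; rewrite -powR_mulrn // -powRrM mulrC powRrM powR_mulrn //.
exact: powR_ge0.
Qed.

Lemma powVX (a u : R) (k : nat) : 0 < a -> ((a ^+ k)^-1) `^ u = (a `^ (- u)) ^+ k.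
Proof.
move=> a0; rewrite -powR_mulrn ?(ltW a0) // -powRN -powRrM.
rewrite mulNr -mulrN mulrC powRrM powR_mulrn //; exact: powR_ge0.
Qed.

Lemma term_pow (t s : R) : 0 < t -> (t `^ s)^-1 * (t / 2) = 2^-1 * t `^ (1 - s).
Proof.
move=> t0; rewrite powRB; last by rewrite implybE (gt_eqF t0) orbT.
rewrite powRr1 ?(ltW t0) //; ring.
Qed.

Lemma pw_in j0 (m : nat) : pw (j0 + m%:Z) = pw j0 * (2 ^+ m)^-1 :> R.
Proof. by rewrite (pw_add j0 m) mulfK // expf_neq0. Qed.

Lemma pw_out j0 (m : nat) : pw (j0 - m.+1%:Z) = pw j0 * 2 ^+ m.+1 :> R.
Proof. by rewrite (pw_add (j0 - m.+1%:Z) m.+1) subrK. Qed.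

Lemma term_in j0 (m : nat) (s : R) :
  (pw (j0 + m%:Z) `^ s)^-1 * (pw (j0 + m%:Z) / 2) =
  (2^-1 * pw j0 `^ (1 - s)) * (2 `^ (- (1 - s))) ^+ m :> R.
Proof.
rewrite term_pow ?pw_gt0 // pw_in powRM ?(ltW (pw_gt0 _)) ?invr_ge0 ?exprn_ge0 //.
by rewrite powVX // mulrA.
Qed.

Lemma term_out j0 (m : nat) (s : R) :
  (pw (j0 - m.+1%:Z) `^ s)^-1 * (pw (j0 - m.+1%:Z) / 2) =
  (2^-1 * pw j0 `^ (1 - s) * 2 `^ (1 - s)) * (2 `^ (1 - s)) ^+ m :> R.
Proof.
rewrite term_pow ?pw_gt0 // pw_out powRM ?(ltW (pw_gt0 _)) ?exprn_ge0 //.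
by rewrite powX // exprS !mulrA.
Qed.

End P7.


Lemma msr_dball {R : realType} {x r : R} {j0} : 0 < x -> pw j0 < r -> r <= pw (j0 - 1) ->
  msr (dball x r) = pw j0.
Proof. by move=> x0 h1 h2; rewrite (@dball_eq _ x r j0 x0 h1 h2) Dy_dyadic // msr_dyadic. Qed.

Lemma half_le {R : realType} (r : R) j0 : r <= pw (j0 - 1) -> r / 2 <= pw j0.
Proof. by rewrite (pwS (j0 - 1)) subrK => h; rewrite ler_pdivrMr //; lra. Qed.

Theorem lemma2p2 (R : realType) (alpha : R) (alpha_gt0 : 0 < alpha) :
  (* comparability constants in (b) and (d), depending only on alpha *)
  (exists c1 c2 : R, 0 < c1 /\ 0 < c2 /\
     forall x r : R, 0 < x -> 0 < r ->
       c1 * r `^ alpha <= (2 * (1 - 2 `^ (- alpha)))^-1 * msr (dball x r) `^ alpha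
       /\ (2 * (1 - 2 `^ (- alpha)))^-1 * msr (dball x r) `^ alpha <= c2 * r `^ alpha) /\
  (exists c1 c2 : R, 0 < c1 /\ 0 < c2 /\
     forall x r : R, 0 < x -> 0 < r ->
       c1 * r `^ (- alpha) <=
         2 `^ (- alpha) / (2 * (1 - 2 `^ (- alpha))) * msr (dball x r) `^ (- alpha)
       /\ 2 `^ (- alpha) / (2 * (1 - 2 `^ (- alpha))) * msr (dball x r) `^ (- alpha)
          <= c2 * r `^ (- alpha)) /\
  (forall x r : R, 0 < x -> 0 < r ->
    (
     (* (a) *)
     [/\ dyadicD (dball x r), dball x r x, msr (dball x r) < r &
         forall I, dyadicD I -> I x -> msr I < r ->
           I `<=` dball x r /\ msr I <= msr (dball x r)]) /\
     (* (b) *)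
     (\int[@lebesgue_measure R]_(y in dball x r) ((ddist x y `^ (1 - alpha))^-1)%:E
        = ((2 * (1 - 2 `^ (- alpha)))^-1 * msr (dball x r) `^ alpha)%:E)%E /\
     (* (c) *)
     (\int[@lebesgue_measure R]_(y in dball x r) ((ddist x y `^ (1 + alpha))^-1)%:E
        = +oo)%E /\
     (* (d) *)
     (\int[@lebesgue_measure R]_(y in Rpos `\` dball x r)
          ((ddist x y `^ (1 + alpha))^-1)%:E
        = (2 `^ (- alpha) / (2 * (1 - 2 `^ (- alpha))) * msr (dball x r) `^ (- alpha))%:E)%E /\
     (* (e) *)
     (\int[@lebesgue_measure R]_(y in Rpos `\` dball x r)
          ((ddist x y `^ (1 - alpha))^-1)%:E = +oo)%E /\
     (* (f) *)
     ((\int[@lebesgue_measure R]_(y in dball x r) ((ddist x y)^-1)%:E = +oo)%E /\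
     (\int[@lebesgue_measure R]_(y in Rpos `\` dball x r) ((ddist x y)^-1)%:E = +oo)%E)).
Proof.
set q := 2 `^ (- alpha).
have q0 : 0 < q by apply: powR_gt0.
have q1 : q < 1.
  rewrite lt_neqAle powR_eq1 negb_or.
  have -> : (2:R) == 1 = false by apply/negbTE; rewrite pnatr_eq1.
  rewrite /= ltNge ler0n /= oppr_eq0 gt_eqF //=.
  rewrite /q -[X in _ <= X](@powRr0 R 2); apply: ler_powR; [rewrite ler1n // | lra].
have Q1 : 1 <= 2 `^ alpha :> R.
  rewrite -[X in X <= _](@powRr0 R 2); apply: ler_powR; [rewrite ler1n // | lra].
have q1' : 1 - q != 0 by rewrite subr_eq0 eq_sym lt_eqF.
have K0 : 0 < (2 * (1 - q))^-1 by rewrite invr_gt0 mulr_gt0 //; lra.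
have half : forall r : R, 0 < r -> (r / 2) `^ alpha = q * r `^ alpha.
  move=> r r0; rewrite powRM ?(ltW r0) ?invr_ge0 // mulrC; congr (_ * _).
  by have := @powVX R 2 alpha 1 (ltr0Sn R 1); rewrite !expr1.
have halfN : forall r : R, 0 < r -> (r / 2) `^ (- alpha) = 2 `^ alpha * r `^ (- alpha).
  move=> r r0; rewrite powRM ?(ltW r0) ?invr_ge0 // mulrC; congr (_ * _).
  by have := @powVX R 2 (- alpha) 1 (ltr0Sn R 1); rewrite !expr1 opprK.
split.
  exists ((2 * (1 - q))^-1 * q), (2 * (1 - q))^-1; split; first by apply: mulr_gt0.
  split => //.
  move=> x r x0 r0; have [j0 [h1 h2]] := @exists_j0 _ r r0.
  rewrite (msr_dball x0 h1 h2); have L0 := @pw_gt0 R j0.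
  split.
    rewrite -mulrA ler_pM2l // -half //; apply: ge0_ler_powR; rewrite ?nnegrE; try lra.
    exact: half_le.
  rewrite ler_pM2l //; apply: ge0_ler_powR; rewrite ?nnegrE; lra.
split.
  exists (q / (2 * (1 - q))), (q / (2 * (1 - q)) * 2 `^ alpha).
  have K1 : 0 < q / (2 * (1 - q)) by exact: mulr_gt0.
  split => //; split; first by apply: mulr_gt0 => //; lra.
  move=> x r x0 r0; have [j0 [h1 h2]] := @exists_j0 _ r r0.
  rewrite (msr_dball x0 h1 h2); have L0 := @pw_gt0 R j0.
  split.
    rewrite ler_pM2l // !powRN lef_pV2 ?posrE ?powR_gt0 //.
    apply: ge0_ler_powR; rewrite ?nnegrE; lra.
  rewrite -[X in _ <= X]mulrA ler_pM2l // -halfN // !powRN lef_pV2 ?posrE ?powR_gt0 ?divr_gt0 //.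
  apply: ge0_ler_powR; rewrite ?nnegrE; try lra.
  exact: half_le.
move=> x r x0 r0; have [j0 [h1 h2]] := @exists_j0 _ r r0.
have mE := msr_dball x0 h1 h2; have L0 := @pw_gt0 R j0.
have dE := @dball_eq _ x r j0 x0 h1 h2.
have g1 : forall s : R, forall t : R, 0 < t -> 0 <= (t `^ s)^-1.
  by move=> s t _; rewrite invr_ge0 powR_ge0.
have g2 : forall t : R, 0 < t -> 0 <= t^-1.
  by move=> t t0; rewrite invr_ge0 ltW.
split.
  rewrite mE; split => //.
  - by rewrite dE Dy_dyadic //; exists j0, (kx j0 x).
  - by rewrite dE; exact: Dy_refl.
  - move=> I [j [k eI]] Ix; rewrite eI msr_dyadic => hj.
    have hj0 := @j0_le _ j0 j r hj h2.
    rewrite eI in Ix; rewrite (@dyadic_Dy _ j k x Ix) dE; split.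
      exact: Dy_sub.
    exact: pw_le.
split.
  rewrite (@inside_int _ (fun t => (t `^ (1 - alpha))^-1) x r j0 x0 h1 h2 (g1 _)).
  under eq_eseriesr => m _ do rewrite term_in.
  have -> : 1 - (1 - alpha) = alpha by ring.
  rewrite series_geo; last by rewrite -/q (ltW q0) q1.
  by rewrite mE -/q; congr (_%:E); field; rewrite q1'.
split.
  rewrite (@inside_int _ (fun t => (t `^ (1 + alpha))^-1) x r j0 x0 h1 h2 (g1 _)).
  under eq_eseriesr => m _ do rewrite term_in.
  have -> : 1 - (1 + alpha) = - alpha by ring.
  rewrite opprK series_div //.
  by rewrite mulr_gt0 ?invr_gt0 ?powR_gt0.
split.
  rewrite (@outside_int _ (fun t => (t `^ (1 + alpha))^-1) x r j0 x0 h1 h2 (g1 _)).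
  under eq_eseriesr => m _ do rewrite term_out.
  have -> : 1 - (1 + alpha) = - alpha by ring.
  rewrite series_geo; last by rewrite -/q (ltW q0) q1.
  by rewrite mE -/q; congr (_%:E); field; rewrite q1'.
split.
  rewrite (@outside_int _ (fun t => (t `^ (1 - alpha))^-1) x r j0 x0 h1 h2 (g1 _)).
  under eq_eseriesr => m _ do rewrite term_out.
  have -> : 1 - (1 - alpha) = alpha by ring.
  rewrite series_div //.
  by rewrite !mulr_gt0 ?invr_gt0 ?powR_gt0.
have t1 : forall j : int, (pw j)^-1 * (pw j / 2) = 2^-1 * 1 ^+ 0 :> R.
  by move=> j; rewrite expr0 mulr1 mulrA mulVf ?mul1r // gt_eqF // pw_gt0.
have t2 : forall j : int, forall m : nat, (pw j)^-1 * (pw j / 2) = 2^-1 * 1 ^+ m :> R.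
  by move=> j m; rewrite expr1n t1 expr0.
split.
  rewrite (@inside_int _ GRing.inv x r j0 x0 h1 h2 g2).
  under eq_eseriesr => m _ do rewrite (t2 _ m).
  by rewrite series_div.
rewrite (@outside_int _ GRing.inv x r j0 x0 h1 h2 g2).
under eq_eseriesr => m _ do rewrite (t2 _ m).
by rewrite series_div.
Qed.
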